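(* Let $(\mathcal{X},\kappa)$ and $(\mathcal{Y},\lambda)$ be finite similarity spaces with Gram matrices $\mathbf{K}$ and $\mathbf{\Lambda}$, and let $(X,Y)$ be a random pair with values in $\mathcal{X}\times\mathcal{Y}$. Then $$\mathbb{H}^{\mathbf{K}}[X]=\mathbb{H}^{\mathbf{K}\otimes\mathbf{J}}[X,Y]\le\mathbb{H}^{\mathbf{K}\otimes\mathbf{\Lambda}}[X,Y]\le\mathbb{H}^{\mathbf{K}\otimes\mathbf{I}}[X,Y]=\mathbb{H}^{\mathbf{I}}[Y]+\mathbb{H}^{\mathbf{K},\mathbf{I}}[X\mid Y].$$
   Context: A finite similarity space $(\mathcal{X},\kappa)$ is a finite set with a symmetric $\kappa:\mathcal{X}\times\mathcal{X}\to[0,1]$ with $\kappa(x,x)=1$; its Gram matrix is $\mathbf{K}_{x,y}=\kappa(x,y)$. For a distribution $\mathbb{P}$ on $\mathcal{X}$, $(\mathbf{K}\mathbb{P})(x)=\sum_y\kappa(x,y)\mathbb{P}(y)$ and the GAIT entropy is $\mathbb{H}^{\mathbf{K}}[\mathbb{P}]=-\sum_x\mathbb{P}(x)\log(\mathbf{K}\mathbb{P})(x)$ (with $0\log0=0$); $\mathbb{H}^{\mathbf{K}}[X]$ is the GAIT entropy of the law of $X$. On $\mathcal{Y}$, $\mathbf{J}$ denotes the all-ones kernel ($\lambda\equiv1$) and $\mathbf{I}$ the identity kernel ($1$ on the diagonal, $0$ elsewhere). For kernels with Gram matrices $\mathbf{K},\mathbf{\Lambda}$, $\mathbb{H}^{\mathbf{K}\otimes\mathbf{\Lambda}}[X,Y]$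 is the GAIT entropy of the joint law of $(X,Y)$ with respect to the product kernel $\kappa(x,x')\lambda(y,y')$, and the conditional entropy is $\mathbb{H}^{\mathbf{K},\mathbf{\Lambda}}[X\mid Y]=\mathbb{H}^{\mathbf{K}\otimes\mathbf{\Lambda}}[X,Y]-\mathbb{H}^{\mathbf{\Lambda}}[Y]$. *)

(* Defs.v *)
From HB Require Import structures.
From mathcomp Require Import all_boot all_order all_algebra.
From mathcomp Require Import all_classical all_reals all_analysis.
Set Implicit Arguments. Unset Strict Implicit. Unset Printing Implicit Defensive.
Import Order.TTheory GRing.Theory Num.Theory.
Local Open Scope ring_scope.

Section GAIT.
Variable R : realType.

Definition is_similarity (T : finType) (kappa : T -> T -> R) : Prop :=
  [/\ forall x y, kappa x y = kappa y x,
      forall x y, 0 <= kappa x y <= 1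
    & forall x, kappa x x = 1].

Definition is_distribution (T : finType) (P : T -> R) : Prop :=
  (forall x, 0 <= P x) /\ \sum_x P x = 1.

Definition kmul (T : finType) (kappa : T -> T -> R) (P : T -> R) (x : T) : R :=
  \sum_y kappa x y * P y.

Definition gait_entropy (T : finType) (kappa : T -> T -> R) (P : T -> R) : R :=
  - \sum_(x | P x != 0) P x * ln (kmul kappa P x).

Definition prod_kernel (X Y : finType) (kappa : X -> X -> R) (lambda : Y -> Y -> R)
  (a b : X * Y) : R := kappa a.1 b.1 * lambda a.2 b.2.

Definition J_kernel (T : finType) (x y : T) : R := 1.
Definition I_kernel (T : finType) (x y : T) : R := (x == y)%:R.

Definition marg1 (X Y : finType) (P : X * Y -> R) (x : X) : R := \sum_y P (x, y).
Definition marg2 (X Y : finType) (P : X * Y -> R) (y : Y) : R := \sum_x P (x, y).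

Definition cond_entropy (X Y : finType) (kappa : X -> X -> R) (lambda : Y -> Y -> R)
  (P : X * Y -> R) : R :=
  gait_entropy (prod_kernel kappa lambda) P - gait_entropy lambda (marg2 P).

End GAIT.

(* Main.v *)
Require Import Defs.
From HB Require Import structures.
From mathcomp Require Import all_boot all_order all_algebra.
From mathcomp Require Import all_classical all_reals all_analysis.
Import Order.TTheory GRing.Theory Num.Theory.
Local Open Scope ring_scope.

Lemma gaitE (R : realType) (T : finType) (k : T -> T -> R) (P : T -> R) :
  gait_entropy k P = - \sum_x P x * ln (kmul k P x).
Proof.
rewrite /gait_entropy big_mkcond /=; congr (- _); apply: eq_bigr => x _.
by case: eqP => // ->; rewrite mul0r.
Qed.

Lemma gait_mono (R : realType) (T : finType) (k1 k2 : T -> T -> R) (P : T -> R) :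
  (forall a b, 0 <= k1 a b <= k2 a b) -> (forall a, k1 a a = 1) ->
  (forall a, 0 <= P a) -> gait_entropy k2 P <= gait_entropy k1 P.
Proof.
move=> hk hd hP; rewrite /gait_entropy lerN2; apply: ler_sum => a hPa.
have Pa : 0 < P a by rewrite lt_def hPa hP.
have k1pos : 0 < kmul k1 P a.
  rewrite /kmul (bigD1 a) //= hd mul1r; apply: ltr_pwDl => //.
  by apply: sumr_ge0 => b _; apply: mulr_ge0 => //; case/andP: (hk a b).
have k12 : kmul k1 P a <= kmul k2 P a.
  apply: ler_sum => b _; apply: ler_wpM2r => //; by case/andP: (hk a b).
apply: ler_wpM2l; first exact: hP.
by rewrite ler_ln // posrE; apply: lt_le_trans k12.
Qed.

Lemma sum_pair (R : realType) (X Y : finType) (G : X * Y -> R) :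
  \sum_p G p = \sum_x \sum_y G (x, y).
Proof. by rewrite pair_bigA; apply: eq_bigr => -[]. Qed.

Theorem theorem7 (R : realType) (X Y : finType)
  (kappa : X -> X -> R) (lambda : Y -> Y -> R) (P : X * Y -> R) :
  is_similarity kappa -> is_similarity lambda -> is_distribution P ->
  [/\ gait_entropy kappa (marg1 P) = gait_entropy (prod_kernel kappa (@J_kernel R Y)) P,
      gait_entropy (prod_kernel kappa (@J_kernel R Y)) P
        <= gait_entropy (prod_kernel kappa lambda) P,
      gait_entropy (prod_kernel kappa lambda) P
        <= gait_entropy (prod_kernel kappa (@I_kernel R Y)) P
    & gait_entropy (prod_kernel kappa (@I_kernel R Y)) P
        = gait_entropy (@I_kernel R Y) (marg2 P) + cond_entropy kappa (@I_kernel R Y) P].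
Proof.
move=> [ks kb kd] [ls lb ld] [hP _]; split.
- rewrite !gaitE; congr (- _).
  rewrite sum_pair.
  apply: eq_bigr => x _.
  have H : forall y, kmul (prod_kernel kappa (@J_kernel R Y)) P (x, y) = kmul kappa (marg1 P) x.
    move=> y; rewrite /kmul sum_pair.
    apply: eq_bigr => a _; rewrite /marg1 mulr_sumr; apply: eq_bigr => b _.
    by rewrite /prod_kernel /J_kernel /= mulr1.
  under [RHS]eq_bigr => y _ do rewrite H.
  by rewrite /marg1 mulr_suml.
- apply: gait_mono => //.
  + move=> a b; rewrite /prod_kernel /J_kernel mulr1.
    case/andP: (kb a.1 b.1) => k0 k1; case/andP: (lb a.2 b.2) => l0 l1.
    by rewrite mulr_ge0 //= ler_piMr.
  + by move=> a; rewrite /prod_kernel kd ld mulr1.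
- apply: gait_mono => //.
  + move=> a b; rewrite /prod_kernel /I_kernel.
    case/andP: (kb a.1 b.1) => k0 k1; case/andP: (lb a.2 b.2) => l0 l1.
    case: eqP => [->|_]; first by rewrite ld mulr1 k0 lexx.
    by rewrite mulr0 lexx mulr_ge0.
  + by move=> a; rewrite /prod_kernel kd /I_kernel eqxx mulr1.
- by rewrite /cond_entropy addrC subrK.
Qed.
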